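(* Let $\mathbb F_q$ be a finite field with $q$ elements, let $n\ge 2$, let $a_1,\dots,a_n,b\in\mathbb F_q^*$ and let $k,k_1,\dots,k_n,m_1,\dots,m_n$ be positive integers. Let $N_q$ be the number of solutions $(x_1,\dots,x_n)\in\mathbb F_q^n$ of $$(a_1x_1^{m_1}+\dots+a_nx_n^{m_n})^k=bx_1^{k_1}\cdots x_n^{k_n},$$ and let $N_q(0)$ and $N_q^*(0)$ be the numbers of solutions of $a_1x_1^{m_1}+\dots+a_nx_n^{m_n}=0$ in $\mathbb F_q^n$ and in $(\mathbb F_q^* )^n$ respectively. If $b$ is a $k_0$th power in $\mathbb F_q$, then $$N_q=k_0(q-1)^{n-1}+N_q(0)-\frac{k_0+q-1}{q-1}\,N_q^*(0)+\sum_{\substack{\psi^d=\varepsilon\\ \psi^{k_0}\ne\varepsilon}}\psi(b)T(\psi),$$ where the sum is over all multiplicative characters $\psi$ of $\mathbb F_q$ whose order divides $d$ but does not divide $k_0$.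
   Context: $k_0=\gcd(k,k_1,\dots,k_n,q-1)$; $M=\mathrm{lcm}[m_1,\dots,m_n]$; $d_j=\gcd(m_j,q-1)$ for $j=1,\dots,n$; $$d=\gcd\Bigl(\sum_{j=1}^n\frac{k_jM}{m_j}-kM,\ \frac{k_1(q-1)}{d_1},\dots,\frac{k_n(q-1)}{d_n},\ q-1\Bigr).$$ $\varepsilon$ denotes the trivial multiplicative character of $\mathbb F_q$. A multiplicative character $\psi$ is extended to $\mathbb F_q$ by $\psi(0)=1$ if $\psi$ is trivial and $\psi(0)=0$ otherwise. For a multiplicative character $\psi$, $$T(\psi)=\frac1{q-1}\sum_{\substack{x_1,\dots,x_n\in\mathbb F_q^*\\ a_1x_1^{m_1}+\dots+a_nx_n^{m_n}\ne0}}\psi^{k_1}(x_1)\cdots\psi^{k_n}(x_n)\,\bar\psi^{k}(a_1x_1^{m_1}+\dots+a_nx_n^{m_n}).$$ *)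

(* Defs.v *)
From HB Require Import structures.
From mathcomp Require Import all_boot all_order all_algebra all_field.
Set Implicit Arguments. Unset Strict Implicit. Unset Printing Implicit Defensive.
Import Order.TTheory GRing.Theory Num.Theory.
Local Open Scope ring_scope.

(* Multiplicative characters of a finite field F, valued in algC, extended to
   F by psi 0 = 1 if psi is trivial and psi 0 = 0 otherwise. *)
Definition mchar_trivial (F : finFieldType) (psi : {ffun F -> algC}) : bool :=
  [forall x : F, (x != 0) ==> (psi x == 1)].

Definition is_mchar (F : finFieldType) (psi : {ffun F -> algC}) : Prop :=
  [/\ psi 1 = 1,
      (forall x y : F, x != 0 -> y != 0 -> psi (x * y) = psi x * psi y) &
      psi 0 = (if mchar_trivial psi then 1 else 0)].

Definition mchar_pow_trivial (F : finFieldType) (psi : {ffun F -> algC}) (e : nat) : bool :=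
  [forall x : F, (x != 0) ==> (psi x ^+ e == 1)].

Definition k0_of (q n k : nat) (ks : 'I_n -> nat) : nat :=
  gcdn (gcdn k (\big[gcdn/0%N]_(j < n) ks j)) q.-1.

Definition M_of (n : nat) (ms : 'I_n -> nat) : nat := \big[lcmn/1%N]_(j < n) ms j.

(* d = gcd( sum_j k_j M/m_j - k M, k_1(q-1)/d_1, ..., k_n(q-1)/d_n, q-1 ),
   with d_j = gcd(m_j, q-1); the first entry is an integer, taken in absolute value. *)
Definition d_of (q n k : nat) (ks ms : 'I_n -> nat) : nat :=
  let M := M_of ms in
  gcdn (gcdn `|((\sum_(j < n) ks j * (M %/ ms j))%N)%:Z - (k * M)%N%:Z|%N
             (\big[gcdn/0%N]_(j < n) ((ks j * q.-1) %/ gcdn (ms j) q.-1)%N))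
       q.-1.

Definition diag_form (F : finFieldType) (n : nat) (a : 'I_n -> F) (ms : 'I_n -> nat)
  (x : {ffun 'I_n -> F}) : F := \sum_(j < n) a j * x j ^+ ms j.

Definition Tsum (F : finFieldType) (n k : nat) (a : 'I_n -> F) (ks ms : 'I_n -> nat)
  (psi : {ffun F -> algC}) : algC :=
  (#|F|.-1%:R)^-1 *
  \sum_(x : {ffun 'I_n -> F} | [forall j, x j != 0] && (diag_form a ms x != 0))
     (\prod_(j < n) psi (x j) ^+ ks j) * ((psi (diag_form a ms x))^* ^+ k).

(* Main.v *)
Require Import Defs.
From HB Require Import structures.
From mathcomp Require Import all_boot all_order all_algebra all_field.
From mathcomp Require Import cyclic.
From mathcomp Require Import ring.
Import Order.TTheory GRing.Theory Num.Theory.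
Local Open Scope ring_scope.

Set Implicit Arguments. Unset Strict Implicit. Unset Printing Implicit Defensive.

Section CharTheory.
Variable F : finFieldType.
Local Notation N := (#|F|.-1).

Lemma N_gt0 : (0 < N)%N.
Proof. rewrite -(cardC1 (0:F)); apply/card_gt0P; exists 1; by rewrite !inE oner_eq0. Qed.

Lemma cardF : #|F| = N.+1.
Proof. by rewrite prednK //; apply/card_gt0P; exists 0. Qed.

Lemma unitN (x : F) : x != 0 -> x ^+ N = 1.
Proof.
move=> x0; have := expf_card x; rewrite cardF exprS => e.
by apply: (mulfI x0); rewrite mulr1.
Qed.

Lemma gen_exists : exists g : F, N.-primitive_root g.
Proof.
have : has N.-primitive_root (enum (predC1 (0:F))).
  apply: has_prim_root N_gt0 _ (enum_uniq _) _.
  - by apply/allP => x; rewrite mem_enum /= => x0; rewrite unity_rootE unitN.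
  - by rewrite -cardE cardC1.
by case/hasP => g _ hg; exists g.
Qed.

Lemma mchar1 (psi : {ffun F -> algC}) : is_mchar psi -> psi 1 = 1.
Proof. by case. Qed.

Lemma mcharM (psi : {ffun F -> algC}) x y : is_mchar psi -> x != 0 -> y != 0 ->
  psi (x * y) = psi x * psi y.
Proof. by case=> _ h _; apply: h. Qed.

Lemma mcharX (psi : {ffun F -> algC}) x m : is_mchar psi -> x != 0 ->
  psi (x ^+ m) = psi x ^+ m.
Proof.
move=> hp x0; elim: m => [|m IH]; first by rewrite !expr0 mchar1.
by rewrite !exprS mcharM ?IH // expf_neq0.
Qed.

Lemma mchar_unit (psi : {ffun F -> algC}) x : is_mchar psi -> x != 0 ->
  psi x ^+ N = 1.
Proof. by move=> hp x0; rewrite -mcharX // unitN // mchar1. Qed.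

Lemma pow1_neq0 (R : nzRingType) (w : R) m : (0 < m)%N -> w ^+ m = 1 -> w != 0.
Proof.
move=> m0 wm; apply/negP => /eqP w0; move: wm; rewrite w0 expr0n.
by case: m m0 => // m _ /= /eqP; rewrite eq_sym oner_eq0.
Qed.

Lemma root_conj (w : algC) m : (0 < m)%N -> w ^+ m = 1 -> w^* = w^-1.
Proof.
move=> m0 wm.
have nw : `|w| = 1.
  by apply/eqP; rewrite -(pexpr_eq1 m0) ?normr_ge0 // -normrX wm normr1.
have w0 : w != 0 by apply: pow1_neq0 m0 wm.
by apply: (mulfI w0); rewrite divff // -normCK nw expr1n.
Qed.

Lemma mchar_neq0 (psi : {ffun F -> algC}) x : is_mchar psi -> x != 0 -> psi x != 0.
Proof.
by move=> hp x0; apply: pow1_neq0 N_gt0 (mchar_unit hp x0).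
Qed.

Lemma mchar_conj (psi : {ffun F -> algC}) x : is_mchar psi -> x != 0 ->
  (psi x)^* = (psi x)^-1.
Proof. by move=> hp x0; apply: (root_conj N_gt0); apply: mchar_unit. Qed.

Lemma mchar_inv (psi : {ffun F -> algC}) x : is_mchar psi -> x != 0 ->
  psi (x^-1) = (psi x)^*.
Proof.
move=> hp x0; have h : psi (x^-1) * psi x = 1.
  by rewrite -mcharM ?invr_eq0 // mulVf // mchar1.
rewrite mchar_conj //; apply: (mulIf (mchar_neq0 hp x0)).
by rewrite h mulVf // mchar_neq0.
Qed.

Lemma gcd_pow (R : pzRingType) (w : R) a b : w ^+ a = 1 -> w ^+ b = 1 ->
  w ^+ (gcdn a b) = 1.
Proof.
case: a => [|a]; first by rewrite gcd0n.
move=> ha hb; case: (egcdnP b (ltn0Sn a)) => km kn e _.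
have : w ^+ (km * a.+1) = w ^+ (kn * b + gcdn a.+1 b) by rewrite e.
by rewrite exprD mulnC exprM ha expr1n mulnC exprM hb expr1n mul1r.
Qed.

Variable g : F.
Hypothesis hg : N.-primitive_root g.

Lemma g_neq0 : g != 0.
Proof.
exact: pow1_neq0 N_gt0 (prim_expr_order hg).
Qed.

Definition lg (x : F) : nat :=
  if [pick i : 'I_N | g ^+ i == x] is Some i then val i else 0%N.

Lemma lgP x : x != 0 -> g ^+ lg x = x.
Proof.
move=> x0; rewrite /lg; case: pickP => [i /eqP //|H].
have [i xi] := prim_rootP hg (unitN x0).
by move: (H i); rewrite /= -xi eqxx.
Qed.

Lemma lg_mul x y : x != 0 -> y != 0 -> modn (lg (x * y)) N = modn (lg x + lg y)%N N.
Proof.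
by move=> x0 y0; apply/eqP; rewrite -(eq_prim_root_expr hg) exprD !lgP // mulf_neq0.
Qed.

Lemma lg1 : modn (lg 1) N = 0%N.
Proof. by apply/eqP; rewrite -(mod0n N) -(eq_prim_root_expr hg) lgP ?oner_eq0. Qed.

Lemma lgg : modn (lg g) N = modn 1 N.
Proof. by apply/eqP; rewrite -(eq_prim_root_expr hg) lgP ?g_neq0. Qed.

Lemma mchar_lg (psi : {ffun F -> algC}) x : is_mchar psi -> x != 0 ->
  psi x = psi g ^+ lg x.
Proof. by move=> hp x0; rewrite -mcharX ?g_neq0 // lgP. Qed.

Lemma mchar_gN (psi : {ffun F -> algC}) : is_mchar psi -> psi g ^+ N = 1.
Proof. by move=> hp; apply: mchar_unit hp g_neq0. Qed.

Lemma pow_trivialE (psi : {ffun F -> algC}) c : is_mchar psi ->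
  mchar_pow_trivial psi c = (psi g ^+ c == 1).
Proof.
move=> hp; apply/forallP/eqP => [H | H x].
  by have := H g; rewrite g_neq0 /= => /eqP.
by apply/implyP => x0; rewrite mchar_lg // -exprM mulnC exprM H expr1n.
Qed.

Variable z : algC.
Hypothesis hz : N.-primitive_root z.

Definition chi (i : nat) : {ffun F -> algC} :=
  [ffun x => if x == 0 then (if (N %| i)%N then 1 else 0) else z ^+ (i * lg x)].

Lemma zmodE i a : z ^+ (i * a) = z ^+ (i * (a %% N)).
Proof.
rewrite -(expr_mod _ (prim_expr_order hz)) -modnMmr.
by rewrite expr_mod // prim_expr_order.
Qed.

Lemma chi_val i x : x != 0 -> chi i x = z ^+ (i * lg x).
Proof. by move=> x0; rewrite ffunE (negbTE x0). Qed.

Lemma chi_g i : chi i g = z ^+ i.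
Proof. by rewrite chi_val ?g_neq0 // zmodE lgg -zmodE muln1. Qed.

Lemma chi_triv i : mchar_trivial (chi i) = (N %| i)%N.
Proof.
apply/forallP/idP => [H | H x].
  have := H g; rewrite g_neq0 chi_g /= => /eqP.
  by move/eqP; rewrite -(prim_order_dvd hz).
apply/implyP => x0; rewrite chi_val //.
by rewrite -(prim_order_dvd hz) dvdn_mulr.
Qed.

Lemma chi_mchar i : is_mchar (chi i).
Proof.
split.
- by rewrite chi_val ?oner_eq0 // zmodE lg1 muln0 expr0.
- move=> x y x0 y0; rewrite !chi_val ?mulf_neq0 //.
  by rewrite zmodE lg_mul // -zmodE mulnDr exprD.
- by rewrite ffunE eqxx chi_triv.
Qed.

Lemma mchar_is_chi (psi : {ffun F -> algC}) : is_mchar psi ->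
  exists i : 'I_N, psi = chi i.
Proof.
move=> hp; have [i Hi] := prim_rootP hz (mchar_gN hp).
exists i.
have agree : forall x, x != 0 -> psi x = chi i x.
  by move=> x x0; rewrite chi_val // mchar_lg // Hi -exprM.
apply/ffunP => x; case: (eqVneq x 0) => [->|x0]; last exact: agree.
have [_ _ ->] := hp; have [_ _ ->] := chi_mchar i.
suff -> : mchar_trivial psi = mchar_trivial (chi i) by [].
apply: eq_forallb => y; case: (eqVneq y 0) => // y0.
by rewrite agree.
Qed.

Lemma chars_perm (chars : seq {ffun F -> algC}) :
  uniq chars -> (forall psi, psi \in chars <-> is_mchar psi) ->
  perm_eq chars [seq chi i | i <- index_iota 0 N].
Proof.
move=> u h; apply: uniq_perm => //.
  rewrite map_inj_in_uniq ?iota_uniq // => i j; rewrite !mem_index_iota.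
  move=> /andP[_ iN] /andP[_ jN] e.
  have := congr1 (fun f : {ffun F -> algC} => f g) e; rewrite /= !chi_g => /eqP.
  by rewrite (eq_prim_root_expr hz) !modn_small // => /eqP.
move=> psi; apply/idP/idP.
  move/h => hp; have [i ->] := mchar_is_chi hp.
  by apply: map_f; rewrite mem_index_iota /=.
by case/mapP => i _ ->; apply/h; apply: chi_mchar.
Qed.

Lemma sum_chars (chars : seq {ffun F -> algC}) (P : pred {ffun F -> algC})
    (f : {ffun F -> algC} -> algC) :
  uniq chars -> (forall psi, psi \in chars <-> is_mchar psi) ->
  \sum_(psi <- chars | P psi) f psi = \sum_(i < N | P (chi i)) f (chi i).
Proof. by move=> u h; rewrite (perm_big _ (chars_perm u h)) big_map big_mkord. Qed.

Lemma orth y : y != 0 ->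
  \sum_(i < N) chi i y = if y == 1 then N%:R else 0.
Proof.
move=> y0.
rewrite (eq_bigr (fun i : 'I_N => (z ^+ lg y) ^+ i)); last first.
  by move=> i _; rewrite chi_val // -exprM mulnC.
case: (eqVneq y 1) => [->|y1].
  have -> : z ^+ lg 1 = 1 by rewrite -[lg 1]mul1n zmodE lg1 muln0 expr0.
  by rewrite (eq_bigr (fun _ => 1)) ?sumr_const ?card_ord // => i _; rewrite expr1n.
set w := z ^+ lg y.
have w1 : w != 1.
  apply: contra_neq y1; rewrite /w => /eqP; rewrite -(prim_order_dvd hz).
  by rewrite (prim_order_dvd hg) lgP // => /eqP.
have wN : w ^+ N = 1 by rewrite /w -exprM mulnC exprM (prim_expr_order hz) expr1n.
have := subrX1 w N; rewrite wN subrr => /esym/eqP.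
by rewrite mulf_eq0 subr_eq0 (negbTE w1) /= => /eqP.
Qed.

End CharTheory.

Lemma cnt_mult m c : (0 < m)%N -> (\sum_(0 <= i < m * c | m %| i) 1)%N = c.
Proof.
move=> m0; elim: c => [|c IH]; first by rewrite muln0 big_geq.
rewrite mulnS addnC (big_cat_nat _ (leq_addr _ _)) //= IH.
rewrite -{1}[(m * c)%N]add0n big_addn addKn.
rewrite (eq_bigl (fun i => m %| i)%N) => [|i]; last by rewrite /= dvdn_addl // dvdn_mulr.
rewrite big_ltn_cond // dvdn0 big_nat_cond big1 ?addn0 ?addn1 //.
by move=> i /andP[/andP[i1 im] mi]; have := dvdn_leq i1 mi; rewrite leqNgt im.
Qed.

Lemma count_pow (K c : nat) : (0 < c)%N -> (c %| K)%N -> (0 < K)%N ->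
  \sum_(i < K | (K %| i * c)%N) (1:algC) = c%:R.
Proof.
move=> c0 cK K0.
rewrite (eq_bigr (fun _ => 1%N%:R)) // -natr_sum; congr (_%:R).
rewrite -(big_mkord (fun i => K %| i * c)%N (fun _ => 1%N)).
have m0 : (0 < K %/ c)%N by rewrite divn_gt0 // dvdn_leq.
rewrite (eq_bigl (fun i => K %/ c %| i)%N) => [|i]; last first.
  by rewrite /= -{1}(divnK cK) dvdn_pmul2r.
set m := (K %/ c)%N; have -> : K = (m * c)%N by rewrite /m divnK.
exact: cnt_mult.
Qed.

Section TsumTheory.
Variables (F : finFieldType) (n k : nat) (a : 'I_n -> F) (ks ms : 'I_n -> nat).
Local Notation N := (#|F|.-1).

Lemma Tsum_scale (psi : {ffun F -> algC}) (s : 'I_n -> F) (c0 : F) :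
  is_mchar psi -> (forall j, s j != 0) -> c0 != 0 -> (forall j, s j ^+ ms j = c0) ->
  Tsum k a ks ms psi =
  ((\prod_(j < n) psi (s j) ^+ ks j) * (psi c0)^* ^+ k) * Tsum k a ks ms psi.
Proof.
move=> hp s0 c00 hs; rewrite /Tsum mulrCA; congr (_ * _); rewrite mulr_sumr.
pose h (x : {ffun 'I_n -> F}) : {ffun 'I_n -> F} := [ffun j => s j * x j].
have hinj : injective h.
  move=> x y /ffunP e; apply/ffunP => j; have := e j; rewrite /h !ffunE.
  by move=> ee; apply: (mulfI (s0 j)).
have hL x : diag_form a ms (h x) = c0 * diag_form a ms x.
  by rewrite /diag_form mulr_sumr; apply: eq_bigr => j _; rewrite /h ffunE exprMn hs mulrCA.
have hP x : [forall j, h x j != 0] && (diag_form a ms (h x) != 0) =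
            [forall j, x j != 0] && (diag_form a ms x != 0).
  rewrite hL mulf_eq0 (negbTE c00) /=; congr andb.
  by apply: eq_forallb => j; rewrite /h ffunE mulf_eq0 (negbTE (s0 j)).
rewrite (reindex_inj hinj); apply: eq_big => x; first exact: hP.
rewrite hP => /andP[/forallP nz L0].
rewrite hL mcharM // rmorphM exprMn.
rewrite (eq_bigr (fun j => psi (s j) ^+ ks j * psi (x j) ^+ ks j)); last first.
  by move=> j _; rewrite /h ffunE mcharM // exprMn.
by rewrite big_split /= mulrACA.
Qed.

Variable g : F.
Hypothesis hg : N.-primitive_root g.

Lemma Tsum_vanish (psi : {ffun F -> algC}) :
  is_mchar psi -> Tsum k a ks ms psi != 0 -> (forall j, 0 < ms j)%N ->
  psi g ^+ d_of #|F| k ks ms = 1.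
Proof.
move=> hp T0 ms0.
have w0 : psi g != 0 := mchar_neq0 hp (g_neq0 hg).
have g0 := g_neq0 hg.
have fac c : Tsum k a ks ms psi = c * Tsum k a ks ms psi -> c = 1.
  move=> e; apply/eqP; rewrite -subr_eq0.
  have : (c - 1) * Tsum k a ks ms psi = 0 by rewrite mulrBl -e mul1r subrr.
  by move/eqP; rewrite mulf_eq0 (negbTE T0) orbF.
have wN : psi g ^+ N = 1 := mchar_gN hg hp.
set M := M_of ms.
have mM j : (ms j %| M)%N by apply: (biglcmn_sup j).
have e1 : psi g ^+ (\sum_(j < n) ks j * (M %/ ms j))%N = psi g ^+ (k * M)%N.
  have hs j : (g ^+ (M %/ ms j)) ^+ ms j = g ^+ M by rewrite -exprM divnK.
  have := fac _ (@Tsum_scale psi (fun j => g ^+ (M %/ ms j)) (g ^+ M) hp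
     (fun j => expf_neq0 _ g0) (expf_neq0 _ g0) hs).
  rewrite (eq_bigr (fun j => psi g ^+ (ks j * (M %/ ms j))%N)); last first.
    by move=> j _; rewrite mcharX // -exprM mulnC.
  rewrite prodrXr mchar_conj ?expf_neq0 // mcharX // -exprVn -exprM.
  have nz : psi g ^+ (M * k) != 0 by rewrite expf_neq0.
  by move=> e; rewrite exprVn in e; rewrite mulnC -[LHS](divfK nz) e mul1r.
have e2 j : psi g ^+ ((ks j * N) %/ gcdn (ms j) N) = 1.
  set dj := gcdn (ms j) N.
  have djN : (dj %| N)%N := dvdn_gcdr _ _.
  have djm : (dj %| ms j)%N := dvdn_gcdl _ _.
  pose s i := if i == j then g ^+ (N %/ dj) else 1.
  have s0 i : s i != 0 by rewrite /s; case: ifP => _; rewrite ?expf_neq0 ?oner_eq0.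
  have hs i : s i ^+ ms i = 1.
    rewrite /s; case: (eqVneq i j) => [->|_]; last exact: expr1n.
    apply/eqP; rewrite -exprM -(prim_order_dvd hg).
    by rewrite -(divnK djm) mulnCA divnK // dvdn_mull.
  have := fac _ (@Tsum_scale psi s 1 hp s0 (oner_neq0 _) hs).
  rewrite mchar1 // conjC1 expr1n mulr1 (bigD1 j) //= big1 ?mulr1; last first.
    by move=> i ij; rewrite /s (negbTE ij) mchar1 // expr1n.
  rewrite /s eqxx mcharX // -exprM => e.
  by rewrite -muln_divA // mulnC.
have hB : psi g ^+ (\big[gcdn/0%N]_(j < n) ((ks j * N) %/ gcdn (ms j) N))%N = 1.
  apply: (big_ind (fun e => psi g ^+ e = 1)); [exact: expr0 | exact: gcd_pow | by move=> j _; apply: e2].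
have hA : psi g ^+ (absz ((\sum_(j < n) ks j * (M %/ ms j))%N%:Z - (k * M)%N%:Z)%R) = 1.
  case: (leqP (\sum_(j < n) ks j * (M %/ ms j))%N (k * M)%N) => h.
    rewrite distnEr // expfB_cond; last by rewrite (negbTE w0).
    by rewrite -e1 divff // expf_neq0.
  rewrite distnEl ?(ltnW h) // expfB_cond; last by rewrite (negbTE w0) ltnW.
  by rewrite e1 divff // expf_neq0.
rewrite /d_of -/M.
by apply: gcd_pow => //; apply: gcd_pow.
Qed.
End TsumTheory.

Unset Implicit Arguments. Set Strict Implicit. Set Printing Implicit Defensive.

Lemma card_split (T : finType) (P Q : pred T) :
  #|[set x | P x]| = (#|[set x | P x && Q x]| + #|[set x | P x && ~~ Q x]|)%N.
Proof.
rewrite -(cardID [set x | Q x] [set x | P x]); congr (_ + _)%N; apply: eq_card => x;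
by rewrite !inE // andbC.
Qed.

Lemma mchar_prod (F : finFieldType) (psi : {ffun F -> algC}) (n : nat) (f : 'I_n -> F) :
  is_mchar psi -> (forall j, f j != 0) ->
  psi (\prod_(j < n) f j) = \prod_(j < n) psi (f j).
Proof.
move=> hp f0.
pose K (u : F) (v : algC) := u != 0 /\ psi u = v.
suff [] : K (\prod_(j < n) f j) (\prod_(j < n) psi (f j)) by [].
apply: (big_rec2 K); first by split; [exact: oner_neq0 | exact: mchar1].
move=> j u v _ [u0 uv]; split; first by rewrite mulf_neq0.
by rewrite mcharM // uv.
Qed.

Theorem corollary1 (F : finFieldType) (n : nat) (a : 'I_n -> F) (b : F)
  (k : nat) (ks ms : 'I_n -> nat) (chars : seq {ffun F -> algC}) :
  (2 <= n)%N ->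
  (forall j, a j != 0) -> b != 0 ->
  (0 < k)%N -> (forall j, 0 < ks j)%N -> (forall j, 0 < ms j)%N ->
  (* chars enumerates all multiplicative characters of F, without repetition *)
  uniq chars -> (forall psi, psi \in chars <-> is_mchar psi) ->
  let q := #|F| in
  let k0 := k0_of q k ks in
  let d := d_of q k ks ms in
  (exists y : F, y ^+ k0 = b) ->
  let Nq := #|[set x : {ffun 'I_n -> F} |
                (diag_form a ms x) ^+ k == b * \prod_(j < n) x j ^+ ks j]| in
  let Nq0 := #|[set x : {ffun 'I_n -> F} | diag_form a ms x == 0]| in
  let Nq0s := #|[set x : {ffun 'I_n -> F} |
                  [forall j, x j != 0] && (diag_form a ms x == 0)]| in
  (Nq%:R : algC) =
    k0%:R * (q.-1%:R) ^+ n.-1 + Nq0%:R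
    - (k0 + q.-1)%:R / q.-1%:R * Nq0s%:R
    + \sum_(psi <- chars | mchar_pow_trivial psi d && ~~ mchar_pow_trivial psi k0)
        psi b * Tsum k a ks ms psi.
Proof.
move=> n2 a0 b0 kp ks0 ms0 uc hc q k0 d [y hy] Nq Nq0 Nq0s.
have [g hg] := gen_exists F.
have [z hz] := C_prim_root_exists (N_gt0 F).
rewrite /Nq /Nq0 /Nq0s /q.
set N := #|F|.-1.
set L := diag_form a ms.
have Nn0 : (N%:R : algC) != 0 by rewrite pnatr_eq0 -lt0n N_gt0.
have k0N : (k0 %| N)%N by rewrite /k0 /k0_of dvdn_gcdr.
have k0p : (0 < k0)%N by rewrite /k0 /k0_of gcdn_gt0 N_gt0 orbT.
have k0k : (k0 %| k)%N by rewrite /k0 /k0_of (dvdn_trans (dvdn_gcdl _ _)) ?dvdn_gcdl.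
have k0ks j : (k0 %| ks j)%N.
  rewrite /k0 /k0_of (dvdn_trans (dvdn_gcdl _ _)) // (dvdn_trans (dvdn_gcdr _ _)) //.
  by apply: (biggcdn_inf j).
have y0 : y != 0 by apply: contra_neq b0 => y0; rewrite -hy y0 expr0n gtn_eqF.
have ptE (i : 'I_N) c : mchar_pow_trivial (chi g z i) c = (N %| i * c)%N.
  by rewrite (pow_trivialE hg c (chi_mchar hg hz i)) (chi_g hg hz) -exprM (prim_order_dvd hz).
pose nz (x : {ffun 'I_n -> F}) := [forall j, x j != 0].
pose E (x : {ffun 'I_n -> F}) := L x ^+ k == b * \prod_(j < n) x j ^+ ks j.
have nzE x : ~~ nz x -> E x = (L x == 0).
  rewrite /nz /E negb_forall => /existsP [j]; rewrite negbK => /eqP xj.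
  have xk : x j ^+ ks j = 0 by rewrite xj expr0n (gtn_eqF (ks0 j)).
  by rewrite (bigD1 j) //= xk mul0r mulr0 expf_eq0 kp.
have hNq : #|[set x | L x ^+ k == b * \prod_(j < n) x j ^+ ks j]| =
    addn #|[set x | E x && nz x]| #|[set x | (L x == 0) && ~~ nz x]|.
  rewrite (card_split _ E nz); congr (_ + _)%N; apply: eq_card => x; rewrite !inE //.
  by case: (boolP (nz x)) => h; rewrite ?andbF ?andbT // nzE.
have hNq0 : #|[set x | L x == 0]| =
    addn #|[set x : {ffun 'I_n -> F} | [forall j, x j != 0] && (L x == 0)]| #|[set x | (L x == 0) && ~~ nz x]|.
  rewrite (card_split _ (fun x => L x == 0) nz); congr (_ + _)%N; apply: eq_card => x.
  by rewrite !inE andbC.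
have hB : (#|[set x | E x && nz x]|%:R : algC) =
    \sum_(psi <- chars) psi b * Tsum k a ks ms psi.
  transitivity (\sum_(x | nz x && (L x != 0)) (if E x then (1:algC) else 0)).
    rewrite -big_mkcondr /= -sumr_const; apply: eq_bigl => x; rewrite inE.
    apply/idP/idP => [/andP[ex nzx] | /andP[/andP[nzx _] ex]]; last by rewrite ex nzx.
    rewrite nzx ex andbT /=.
    have Lk : L x ^+ k != 0.
      rewrite (eqP ex) mulf_neq0 //; apply/prodf_neq0 => j _.
      by rewrite expf_neq0 //; apply: (forallP nzx).
    by apply: contra_neq Lk => ->; rewrite expr0n gtn_eqF.
  rewrite /Tsum -/N -/L.
  rewrite [RHS](eq_bigr (fun psi : {ffun F -> algC} => \sum_(x | nz x && (L x != 0))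
       N%:R^-1 * (psi b * ((\prod_(j < n) psi (x j) ^+ ks j) * (psi (L x))^* ^+ k))));
    last by move=> psi _; rewrite !mulr_sumr; apply: eq_bigr => x _; rewrite mulrCA.
  rewrite [RHS]exchange_big /=; apply: eq_bigr => x /andP[nzx Lx].
  rewrite -mulr_sumr.
  have Lk : L x ^+ k != 0 by rewrite expf_neq0.
  have P0 : \prod_(j < n) x j ^+ ks j != 0.
    by apply/prodf_neq0 => j _; rewrite expf_neq0 //; apply: (forallP nzx).
  set Y := b * \prod_(j < n) x j ^+ ks j / L x ^+ k.
  have Y0 : Y != 0 by rewrite /Y !mulf_neq0 ?invr_eq0.
  have hY : \sum_(psi <- chars) psi b * ((\prod_(j < n) psi (x j) ^+ ks j) * (psi (L x))^* ^+ k)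
          = \sum_(psi <- chars) psi Y.
    rewrite big_seq [RHS]big_seq; apply: eq_bigr => psi /hc hp.
    rewrite /Y mcharM ?invr_eq0 ?mulf_neq0 // mcharM // mchar_inv // mcharX // rmorphXn.
    rewrite mchar_prod //; last by move=> j; rewrite expf_neq0 //; apply: (forallP nzx).
    rewrite mulrA; congr (_ * _ * _); apply: eq_bigr => j _.
    by rewrite mcharX //; apply: (forallP nzx).
  rewrite hY (sum_chars hg hz xpredT (fun psi => psi Y) uc hc) /= (orth hg hz Y0).
  have -> : (Y == 1) = E x.
    rewrite /E; apply/eqP/eqP => [e | e]; last by rewrite /Y -e divff.
    by rewrite -[RHS](divfK Lk) -/Y e mul1r.
  by case: (E x); rewrite ?mulr0 // mulVf.
have ptP (psi : {ffun F -> algC}) e x : mchar_pow_trivial psi e -> x != 0 -> psi x ^+ e = 1.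
  by move=> /forallP/(_ x) h x0; move: h; rewrite x0 => /eqP.
have sum1 (T : finType) (P : pred T) : \sum_(x | P x) (1:algC) = #|[set x | P x]|%:R.
  by rewrite -sumr_const; apply: eq_bigl => x; rewrite inE.
have hA : addn #|[set x | nz x && (L x != 0)]|
               #|[set x : {ffun 'I_n -> F} | [forall j, x j != 0] && (L x == 0)]| = (N ^ n)%N.
  have -> : #|[set x : {ffun 'I_n -> F} | [forall j, x j != 0] && (L x == 0)]| =
            #|[set x | nz x && ~~ (L x != 0)]|.
    by apply: eq_card => x; rewrite !inE negbK.
  rewrite -(card_split _ nz (fun x => L x != 0)).
  have -> : #|[set x | nz x]| = #|@ffun_on_mem 'I_n F (mem (predC1 (0:F)))|.
    by apply: eq_card => x; rewrite inE.
  by rewrite card_ffun_on cardC1 card_ord.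
have hP1 : \sum_(i < N | mchar_pow_trivial (chi g z i) k0)
             chi g z i b * Tsum k a ks ms (chi g z i)
           = k0%:R * (N%:R^-1 * #|[set x | nz x && (L x != 0)]|%:R).
  have hm i := chi_mchar hg hz i.
  rewrite (eq_bigr (fun _ => 1 * (N%:R^-1 * #|[set x | nz x && (L x != 0)]|%:R)));
    last first.
    move=> i pti; rewrite -hy mcharX // ptP // !mul1r /Tsum -/N -/L; congr (_ * _).
    rewrite -sum1; apply: eq_bigr => x /andP[/forallP nzx Lx].
    rewrite big1 ?mul1r => [|j _].
      have h1 : chi g z i (L x) ^+ k = 1 by rewrite -(divnK k0k) mulnC exprM ptP // expr1n.
      by rewrite mchar_conj // exprVn h1 invr1.
    by rewrite -(divnK (k0ks j)) mulnC exprM ptP // expr1n.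
  rewrite -mulr_suml (eq_bigl (fun i : 'I_N => N %| i * k0)%N); last by move=> i; rewrite ptE.
  by rewrite count_pow // N_gt0.
have hP3 : \sum_(i < N | ~~ mchar_pow_trivial (chi g z i) k0 &&
                         ~~ mchar_pow_trivial (chi g z i) d)
             chi g z i b * Tsum k a ks ms (chi g z i) = 0.
  apply: big1 => i /andP[_ npd]; apply/eqP; rewrite mulf_eq0; apply/orP; right.
  apply: contraR npd => T0; rewrite (pow_trivialE hg d (chi_mchar hg hz i)).
  by apply/eqP; apply: (Tsum_vanish hg (chi_mchar hg hz i) T0 ms0).
have hB' : (#|[set x | E x && nz x]|%:R : algC) =
    k0%:R * (N%:R^-1 * #|[set x | nz x && (L x != 0)]|%:R) +
    \sum_(i < N | mchar_pow_trivial (chi g z i) d && ~~ mchar_pow_trivial (chi g z i) k0)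
       chi g z i b * Tsum k a ks ms (chi g z i).
  rewrite hB (sum_chars hg hz xpredT (fun psi => psi b * Tsum k a ks ms psi) uc hc) /=.
  rewrite (bigID (fun i : 'I_N => mchar_pow_trivial (chi g z i) k0)) /= hP1; congr (_ + _).
  rewrite (bigID (fun i : 'I_N => mchar_pow_trivial (chi g z i) d)) /= hP3 addr0.
  by apply: eq_bigl => i; rewrite andbC.
rewrite (sum_chars hg hz (fun psi => mchar_pow_trivial psi d && ~~ mchar_pow_trivial psi k0)
           (fun psi => psi b * Tsum k a ks ms psi) uc hc) /=.
rewrite hNq hNq0 !natrD hB'.
have hA' : (#|[set x | nz x && (L x != 0)]|%:R : algC) =
    N%:R ^+ n - #|[set x : {ffun 'I_n -> F} | [forall j, x j != 0] && (L x == 0)]|%:R.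
  by rewrite -natrX -hA natrD addrK.
rewrite hA'.
move: Nn0; set S := \sum_(i < N | _) _.
set Z := #|[set x : {ffun 'I_n -> F} | [forall j, x j != 0] && (L x == 0)]|%:R.
set W := #|[set x | (L x == 0) && ~~ nz x]|%:R.
set NN := N%:R.
have -> : n = n.-1.+1 by rewrite prednK // (ltn_trans _ n2).
rewrite /= exprS => NN0.
by field.
Qed.
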